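(* Let $H$ be a real Hilbert space, $r_0>0$ and $\mathcal{V}:(0,r_0]\rightrightarrows H$ a set-valued mapping with nonempty values. Assume that for each $r\in(0,r_0]$ there exist $\epsilon_r\in(0,r)$ and an absolutely continuous curve $\theta_r:(r-\epsilon_r,r]\to H$ such that $\theta_r(s)\in\mathcal{V}(s)$ for all $s\in(r-\epsilon_r,r]$. Then there exist a countable partition $\{I_n\}_{n\in\mathbb{N}}$ of $(0,r_0]$ into intervals with nonempty interior and a map $\theta:(0,r_0]\to H$ with $\theta(r)\in\mathcal{V}(r)$ for all $r\in(0,r_0]$ such that $\theta$ is absolutely continuous on each $I_n$. *)

(* Defs.v *)
From HB Require Import structures.
From mathcomp Require Import all_boot all_order all_algebra.
From mathcomp Require Import all_classical all_reals all_analysis.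
Set Implicit Arguments. Unset Strict Implicit. Unset Printing Implicit Defensive.
Import Order.TTheory GRing.Theory Num.Theory.
Import numFieldNormedType.Exports.
Local Open Scope classical_set_scope.
Local Open Scope ring_scope.

Definition is_inner_product (R : realType) (H : normedModType R)
  (inner : H -> H -> R) : Prop :=
  [/\ forall x y, inner x y = inner y x,
      forall a x y z, inner (a *: x + y) z = a * inner x z + inner y z
    & forall x, `|x| ^+ 2 = inner x x].

Definition abs_cont_on (R : realType) (H : normedModType R)
  (I : set R) (f : R -> H) : Prop :=
  forall eps : R, 0 < eps -> exists2 delta : R, 0 < delta &
    forall (n : nat) (a b : 'I_n -> R),
      (forall k, I (a k) /\ I (b k) /\ a k <= b k) ->
      (forall k l, k != l -> b k <= a l \/ b l <= a k) ->
      \sum_(k < n) (b k - a k) < delta ->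
      \sum_(k < n) `|f (b k) - f (a k)| < eps.

(* Main.v *)
Require Import Defs.
From HB Require Import structures.
From mathcomp Require Import all_boot all_order all_algebra.
From mathcomp Require Import all_classical all_reals all_analysis.
From mathcomp Require Import lra.
Import Order.TTheory GRing.Theory Num.Theory.
Import numFieldNormedType.Exports.
Local Open Scope classical_set_scope.
Local Open Scope ring_scope.

Lemma ac_ext (R : realType) (H : normedModType R) (I J : set R) (f g : R -> H) :
  I `<=` J -> (forall x, I x -> f x = g x) -> abs_cont_on J g -> abs_cont_on I f.
Proof.
move=> IJ fg ac eps e0; have [d d0 hd] := ac eps e0; exists d => // n a b h1 h2 h3.
rewrite (eq_bigr (fun k => `|g (b k) - g (a k)|)); last first.
  by move=> k _; have [ha [hb _]] := h1 k; rewrite !fg.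
apply: hd => // k; have [ha [hb hab]] := h1 k; split; [exact: IJ|split=>//; exact: IJ].
Qed.

Theorem proposition5p7 (R : realType) (H : completeNormedModType R)
  (inner : H -> H -> R) (hinner : is_inner_product inner)
  (r0 : R) (hr0 : 0 < r0) (Vm : R -> set H)
  (hne : forall r : R, 0 < r <= r0 -> Vm r !=set0)
  (hloc : forall r : R, 0 < r <= r0 ->
     exists eps : R, exists theta_r : R -> H,
       [/\ 0 < eps, eps < r,
           abs_cont_on [set` `]r - eps, r]] theta_r
         & forall s : R, r - eps < s <= r -> Vm s (theta_r s)]) :
  exists (I : nat -> set R) (theta : R -> H),
    (forall n, is_interval (I n)) /\
    (forall n, (I n)° !=set0) /\
    (forall n m, n <> m -> I n `&` I m = set0) /\
    \bigcup_n I n = [set` `]0, r0]] /\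
    (forall r : R, 0 < r <= r0 -> Vm r (theta r)) /\
    (forall n, abs_cont_on (I n) theta).
Proof.
pose good : set (R*R) := fun p => [/\ 0 < p.1, p.1 < p.2, p.2 <= r0 &
  exists th : R -> H, abs_cont_on [set` `]p.1, p.2]] th /\
    forall s, p.1 < s <= p.2 -> Vm s (th s)].
pose W (S : set (R*R)) (x : R) := exists2 p, S p & p.1 < x <= p.2.
pose disj (S : set (R*R)) := forall p q, S p -> S q -> p <> q ->
  p.2 <= q.1 \/ q.2 <= p.1.
pose P : set (set (R*R)) := fun S => [/\ S `<=` good, disj S &
  forall x y, W S x -> x <= y <= r0 -> W S y].
have [A [[Agood Adisj Aup] Amax]] : exists A, P A /\ forall B, A `<` B -> ~ P B.
  apply: Zorn_bigcup => F FP Ftot; split.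
  - by move=> p [S FS Sp]; have [+ _ _] := FP S FS; apply.
  - move=> p q [S FS Sp] [S' FS' S'q] pq.
    have [SS'|S'S] := Ftot S S' FS FS'.
      by have [_ + _] := FP S' FS'; apply => //; exact: SS'.
    by have [_ + _] := FP S FS; apply => //; exact: S'S.
  - move=> x y [p [S FS Sp] hx] hxy.
    have [_ _ up] := FP S FS.
    have [|q Sq hq] := up x y _ hxy; first by exists p.
    by exists q => //; exists S.
have cover : forall x, 0 < x <= r0 -> W A x.
  move=> x0 hx0; case: (pselect (W A x0)) => // nW; exfalso.
  pose C := [set x | 0 < x <= r0 /\ ~ W A x].
  have C0 : C x0 by [].
  have hsC : has_sup C.
    by split; [exists x0 | exists r0 => y [/andP[_ ->]]].
  set t := sup C.
  have ht0 : x0 <= t := sup_upper_bound hsC C0.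
  have htr : t <= r0 by apply: ge_sup; [exists x0|move=> y [/andP[_ ->]]].
  have claim1 : forall y, t < y <= r0 -> W A y.
    move=> y /andP[ty yr]; case: (pselect (W A y)) => // nWy.
    have : y <= t.
      apply: (sup_upper_bound hsC); split => //; apply/andP; split => //.
      case/andP: hx0 => hx _; lra.
    by rewrite leNgt ty.
  have claim2 : ~ W A t.
    case => p Ap /andP[pt tp].
    have [c [/andP[c0 cr] nc] hct] := sup_adherent (ltac:(rewrite subr_gt0 //) : 0 < t - p.1) hsC.
    have ct : c <= t := sup_upper_bound hsC (conj (introT andP (conj c0 cr)) nc).
    apply: nc; exists p => //; apply/andP; split; rewrite -/t in hct; lra.
  have claim3 : forall y, W A y -> t < y.
    move=> y Wy; rewrite ltNge; apply/negP => yt; apply: claim2.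
    apply: (Aup y t Wy); apply/andP; split => //.
  have t0 : 0 < t by case/andP: hx0 => hx _; lra.
  have [eps [th [e0 et ac hV]]] := hloc t (introT andP (conj t0 htr)).
  pose q := (t - eps, t).
  have goodq : good q.
    split => /=; [lra|lra|done|by exists th].
  have qA : ~ A q.
    by move=> Aq; apply: claim2; exists q => //=; apply/andP; split; lra.
  have key : forall p, A p -> q.2 <= p.1.
    move=> p Ap /=; have [p0 p12 p2r _] := Agood p Ap.
    have tp2 : t < p.2 by apply: claim3; exists p => //; apply/andP; split.
    rewrite leNgt; apply/negP => p1t; apply: claim2; exists p => //.
    by apply/andP; split; [done|exact: ltW].
  apply: (Amax (A `|` [set q])).
    split; first by move=> p Ap; left.
    by move=> sub; apply: qA; exact: sub _ (or_intror erefl).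
  split.
  - by move=> p [Ap|->]; [exact: Agood|exact: goodq].
  - move=> p p' [Ap|->] [Ap'|->] ne.
    + exact: Adisj.
    + by right; exact: key.
    + by left; exact: key.
    + by case: ne.
  - move=> x y [p [Ap|->] hx] /andP[xy yr].
    + have tx := claim3 x (ex_intro2 _ _ p Ap hx).
      have [|p' Ap' h] := claim1 y; first by apply/andP; split => //; lra.
      by exists p' => //; left.
    + case: (ltP t y) => ty.
        have [|p' Ap' h] := claim1 y; first by apply/andP; split.
        by exists p' => //; left.
      exists q; [by right|]; move: hx => /= /andP[h1 h2]; apply/andP; split; lra.
have hrq0 : forall p : R*R, exists r : rat, p.1 < p.2 -> ratr r \in `]p.1, p.2[.
  move=> p; case: (ltP p.1 p.2) => h; last by exists 0 => hlt; exfalso; move: h hlt; rewrite leNgt => /negP.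
  by have [r hr] := rat_in_itvoo h; exists r.
have [rq hrq] := choice hrq0.
have Acnt : countable A.
  apply/countable_injP; exists (fun p => pickle (rq p)).
  move=> p p' /set_mem Ap /set_mem Ap' /(pcan_inj pickleK) e.
  case: (pselect (p = p')) => // ne; exfalso.
  have [_ h1 _ _] := Agood p Ap; have [_ h1' _ _] := Agood p' Ap'.
  have := hrq p h1; have := hrq p' h1'; rewrite e !in_itv /= => /andP[a b] /andP[c d].
  by case: (Adisj p p' Ap Ap' ne); lra.
have hpr0 : forall p, exists p', A p -> A p' /\ p'.1 < p.1.
  move=> p; case: (pselect (A p)) => Ap; last by exists p.
  have [h0 h12 h2 _] := Agood p Ap.
  have [|p' Ap' /andP[a b]] := cover p.1; first by apply/andP; split => //; lra.
  by exists p'.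
have [pr hpr] := choice hpr0.
have [p0 Ap0 _] := cover r0 (introT andP (conj hr0 (lexx r0))).
pose s n := iter n pr p0.
have sA : forall n, A (s n) by elim => [|n IH] //=; exact: (hpr _ IH).1.
have sdec : forall m n, (m < n)%N -> (s n).1 < (s m).1.
  move=> m; elim => [//|n IH]; rewrite ltnS leq_eqVlt => /orP[/eqP <-|mn].
    exact: (hpr _ (sA m)).2.
  exact: lt_trans (hpr _ (sA n)).2 (IH mn).
have sinj : injective s.
  move=> m n e; case: (ltngtP m n) => // mn; have := sdec _ _ mn; rewrite e ltxx //.
have Ainf : ~ finite_set A.
  move=> fA.
  have fR : finite_set (range s) by apply: sub_finite_set fA => _ [n _ <-].
  have hg0 : forall y : R*R, exists n, range s y -> s n = y.
    move=> y; case: (pselect (range s y)) => [[n _ <-]|ny]; first by exists n.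
    by exists 0%N.
  have [g hg] := choice hg0.
  apply: infinite_nat; rewrite (_ : [set: nat] = [set g x | x in range s]).
    exact: finite_image.
  apply/seteqP; split => // n _; exists (s n); first by exists n.
  by apply: sinj; apply: hg; exists n.
have /card_set_bijP[f [_ finj fsurj]] := eq_card_nat Acnt Ainf.
have hen0 : forall n, exists p, A p /\ f p = n.
  by move=> n; have [p Ap e] := fsurj n I; exists p.
have [en hen] := choice hen0.
have enA : forall n, A (en n) by move=> n; exact: (hen n).1.
have eninj : injective en.
  by move=> n m e; rewrite -(hen n).2 -(hen m).2 e.
have hth0 : forall p, exists th : R -> H, good p -> abs_cont_on [set` `]p.1, p.2]] th /\
    forall s, p.1 < s <= p.2 -> Vm s (th s).
  move=> p; case: (pselect (good p)) => gp; last by exists (fun=> 0).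
  by have [_ _ _ [th hth]] := gp; exists th.
have [thof hth] := choice hth0.
have hpc0 : forall r, exists p, 0 < r <= r0 -> A p /\ p.1 < r <= p.2.
  move=> r; case: (pselect (0 < r <= r0)) => hr; last by exists (0,0).
  by have [p Ap hp] := cover r hr; exists p.
have [pc hpc] := choice hpc0.
have uniq : forall p p' x, A p -> A p' -> p.1 < x <= p.2 -> p'.1 < x <= p'.2 -> p = p'.
  move=> p p' x Ap Ap' /andP[a b] /andP[c d].
  case: (pselect (p = p')) => // ne; exfalso.
  by case: (Adisj p p' Ap Ap' ne); lra.
exists (fun n => [set` `](en n).1, (en n).2]]), (fun r => thof (pc r) r).
split; [|split; [|split; [|split; [|split]]]].
- by move=> n; exact: interval_is_interval.
- move=> n; rewrite interior_itv_bnd.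
  have [_ h _ _] := Agood _ (enA n).
  by exists (((en n).1 + (en n).2) / 2); rewrite /= in_itv /=; apply/andP; split; lra.
- move=> n m nm; apply/seteqP; split => // x [/=].
  rewrite !in_itv /= => h1 h2; apply: nm; apply: eninj.
  exact: uniq (enA n) (enA m) h1 h2.
- apply/seteqP; split => x.
    move=> [n _ /=]; rewrite !in_itv /= => /andP[a b].
    have [h0 _ h2 _] := Agood _ (enA n); apply/andP; split; lra.
  rewrite /= in_itv /= => hx; have [p Ap hp] := cover x hx.
  exists (f p) => //=; rewrite in_itv /=.
  have -> : en (f p) = p by apply: finj; [exact: mem_set (enA _)|exact: mem_set|exact: (hen _).2].
  exact: hp.
- move=> r hr; have [Apc hp] := hpc r hr.
  exact: (hth _ (Agood _ Apc)).2.
- move=> n; have [ac _] := hth _ (Agood _ (enA n)).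
  apply: (@ac_ext R H _ _ _ (thof (en n)) (subset_refl _) _ ac) => [x|x] /=;
    rewrite ?in_itv /= => hx; first exact: hx.
  have hx0 : 0 < x <= r0.
    have [h0 _ h2 _] := Agood _ (enA n); case/andP: hx => a b; apply/andP; split; lra.
  have [Apc hp] := hpc x hx0.
  by rewrite (uniq _ _ _ Apc (enA n) hp hx).
Qed.
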